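(* Let $k$ be odd and $m$ a positive integer. For $i=1,\dots,k$ let $A_i=(a_{i,1},a_{i,2},\dots,a_{i,m})$ be a sequence with entries from a two-element set of symbols, and let $P=(a_{1,1},a_{2,1},\dots,a_{k,1},a_{1,2},a_{2,2},\dots,a_{k,2},\dots,a_{1,m},\dots,a_{k,m})$. Then $f(P)\le (k-1)m+\min\{f(A_i):1\le i\le k\}$.
   Context: For a finite sequence $X=(x_1,\dots,x_M)$ of symbols from a two-element set, $f(X)=|\{i\in\{1,\dots,M\}: x_i\ne x_{i+1}\}|$, where $x_{M+1}=x_1$ (i.e. the number of cyclic changes of symbol). *)

(* Defs.v *)
From mathcomp Require Import all_boot.
Set Implicit Arguments. Unset Strict Implicit. Unset Printing Implicit Defensive.

(* Symbols from a two-element set are modeled by bool. *)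
(* f(X): number of cyclic changes of symbol, indices taken modulo M = size X. *)
Definition cyc_changes (X : seq bool) : nat :=
  \sum_(i < size X) (nth false X i != nth false X ((i.+1) %% size X)).

(* The sequence A_i = (a_{i,1},...,a_{i,m}) as a list (0-indexed). *)
Definition row_seq (m : nat) (a : nat -> nat -> bool) (i : nat) : seq bool :=
  [seq a i j | j <- iota 0 m].

Definition interleave (k m : nat) (a : nat -> nat -> bool) : seq bool :=
  flatten [seq [seq a i j | i <- iota 0 k] | j <- iota 0 m].

Definition seqmin (s : seq nat) : nat := foldr minn (head 0 s) s.

(* Main.v *)
Require Import Defs.
From mathcomp Require Import all_boot zify.

Lemma key_odd (g : nat -> bool) n :
  odd (\sum_(0 <= t < n) (g t != g t.+1)) = (g 0 != g n).
Proof.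
elim: n => [|n IH]; first by rewrite big_nil; case: (g 0).
rewrite big_nat_recr //= oddD IH.
by case: (g 0); case: (g n); case: (g n.+1).
Qed.

Lemma key_bound (g : nat -> bool) k : odd k ->
  \sum_(0 <= t < k) (g t != g t.+1) <= (k - 1) + (g 0 != g k).
Proof.
move=> ok.
have le : \sum_(0 <= t < k) (g t != g t.+1) <= k.
  apply: (@leq_trans (\sum_(0 <= t < k) 1)); first by apply: leq_sum => i _; exact: leq_b1.
  by rewrite sum_nat_const_nat muln1 subn0.
have := key_odd g k.
case: (g 0 != g k) => /= H; first lia.
have : \sum_(0 <= t < k) (g t != g t.+1) != k.
  by apply/eqP => E; rewrite E ok in H.
lia.
Qed.

Lemma sum_shift1 (h : nat -> nat) N r : (forall p, h (p + N) = h p) ->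
  \sum_(0 <= p < N) h (p + r) = \sum_(0 <= p < N) h p.
Proof.
move=> hp; elim: r => [|r IH]; first by apply: eq_bigr => p _; rewrite addn0.
rewrite -IH.
have E := @big_nat_recr nat 0 addn N 0 (fun p => h (p + r)) (leq0n N).
rewrite big_nat_recl // in E.
rewrite add0n addnC hp in E.
under eq_bigr do rewrite addnS -addSn.
by apply/eqP; rewrite -(eqn_add2l (h r)) E addnC.
Qed.

Lemma sum_block (F : nat -> nat) m k :
  \sum_(0 <= p < m * k) F p = \sum_(0 <= j < m) \sum_(0 <= t < k) F (t + j * k).
Proof.
elim: m => [|m IH]; first by rewrite mul0n !big_nil.
rewrite big_nat_recr //= -IH (@big_cat_nat _ _ _ (m * k)) //; last by rewrite mulSn; lia.
congr (_ + _).
have := big_addn 0 (m.+1 * k) (m * k) xpredT F.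
by rewrite add0n mulSn addnK; apply.
Qed.

Lemma interleave_eq k m a : 0 < k ->
  interleave k m a = [seq a (p %% k) (p %/ k) | p <- iota 0 (m * k)].
Proof.
move=> k0; elim: m => [|m IH]; first by [].
rewrite /interleave in IH *.
rewrite -addn1 iotaD map_cat flatten_cat IH mulnDl mul1n iotaD map_cat.
congr (_ ++ _); rewrite /= cats0 add0n -{1}[m * k]addn0 (iotaDl (m * k) 0 k) -map_comp.
apply/eq_in_map => i; rewrite mem_iota => /andP[_ lt] /=.
by rewrite modnMDl modn_small // divnMDl // divn_small // addn0.
Qed.

Lemma idx_facts m k j r : j < m -> r < k ->
  (j * k + r) %% (m * k) %% k = r /\ (j * k + r) %% (m * k) %/ k = j.
Proof.
move=> jm rk.
have lt : j * k + r < m * k.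
  apply: (@leq_trans (j.+1 * k)); first by rewrite mulSn; lia.
  by rewrite leq_mul2r jm orbT.
rewrite (modn_small lt); split; first by rewrite modnMDl modn_small.
by rewrite divnMDl ?divn_small ?addn0 //; lia.
Qed.

Theorem bound_r (k m : nat) (a : nat -> nat -> bool) r :
  odd k -> 0 < m -> r < k ->
  cyc_changes (interleave k m a) <= (k - 1) * m + cyc_changes (row_seq m a r).
Proof.
move=> ok m0 rk.
have k0 : 0 < k by case: k ok rk.
set N := m * k.
have N0 : 0 < N by rewrite muln_gt0 m0 k0.
set G := fun p => a ((p %% N) %% k) ((p %% N) %/ k).
have cycP : cyc_changes (interleave k m a) = \sum_(0 <= p < N) (G p != G p.+1).
  rewrite /cyc_changes interleave_eq // size_map size_iota -/N big_mkord.
  apply: eq_bigr => -[p lt] _ /=.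
  rewrite (nth_map 0) ?size_iota // nth_iota // (nth_map 0) ?size_iota ?ltn_pmod //.
  rewrite nth_iota ?ltn_pmod // !add0n /G (modn_small lt) //.
have rowE : cyc_changes (row_seq m a r) = \sum_(0 <= j < m) (a r j != a r (j.+1 %% m)).
  rewrite /cyc_changes /row_seq size_map size_iota big_mkord.
  apply: eq_bigr => -[j lt] _ /=.
  rewrite (nth_map 0) ?size_iota // nth_iota // (nth_map 0) ?size_iota ?ltn_pmod //.
  by rewrite nth_iota ?ltn_pmod.
have Gper : forall p, G (p + N) = G p by move=> p; rewrite /G modnDr.
have Gval : forall j, j < m -> G (j * k + r) = a r j.
  by move=> j jm; have [E1 E2] := idx_facts m k j r jm rk; rewrite /G E1 E2.
rewrite cycP rowE -(@sum_shift1 (fun p => G p != G p.+1) N r); last first.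
  by move=> p /=; rewrite Gper -addSn Gper.
rewrite sum_block (_ : (k - 1) * m = \sum_(0 <= j < m) (k - 1)); last first.
  by rewrite sum_nat_const_nat subn0 mulnC.
rewrite -big_split /=.
rewrite !big_mkord; apply: leq_sum => -[j jm] _ /=.
have -> : \sum_(0 <= t < k) (G (t + j * k + r) != G (t + j * k + r).+1)
   = \sum_(0 <= t < k) ((fun t => G (t + j * k + r)) t != (fun t => G (t + j * k + r)) t.+1).
  by apply: eq_bigr => t _; rewrite /= !addSn.
apply: leq_trans (key_bound _ _ ok) _.
rewrite /= add0n Gval // leq_add2l.
have [jm1|jm1] := ltnP j.+1 m.
  by rewrite (modn_small jm1) -mulSn Gval.
have Ej : j.+1 = m by apply/eqP; rewrite eqn_leq jm1 jm.
rewrite Ej modnn -mulSn Ej -/N addnC Gper.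
by have := Gval 0 m0; rewrite mul0n add0n => ->.
Qed.

Lemma foldr_min_in x t : foldr minn x t \in x :: t.
Proof.
elim: t => [|y t IH] /=; first by rewrite inE eqxx.
rewrite /minn; case: ifP => _; first by rewrite !inE eqxx orbT.
move: IH; rewrite !inE => /orP[->|->] //; by rewrite ?orbT.
Qed.

Lemma seqmin_in x t : seqmin (x :: t) \in x :: t.
Proof.
rewrite /seqmin /= /minn; case: ifP => _; first by rewrite inE eqxx.
exact: foldr_min_in.
Qed.

Theorem lemma5p4 (k m : nat) (a : nat -> nat -> bool) :
  odd k -> 0 < m ->
  cyc_changes (interleave k m a) <=
    (k - 1) * m + seqmin [seq cyc_changes (row_seq m a i) | i <- iota 0 k].
Proof.
move=> ok m0.
case: k ok => [|k'] // ok.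
have := seqmin_in (cyc_changes (row_seq m a 0))
          [seq cyc_changes (row_seq m a i) | i <- iota 1 k'].
have -> : iota 0 k'.+1 = 0 :: iota 1 k' by [].
rewrite map_cons inE => /orP[/eqP ->|/mapP[r]]; first exact: bound_r.
rewrite mem_iota => /andP[_ rk] ->.
by apply: bound_r; lia.
Qed.
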